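(* Let $n\ge 2$ and let $P\in\mathbb{R}^{n\times n}$ be a row-stochastic matrix with $p_{ii}=0$ and $p_{ij}\in[0,1]$ for all $i,j$, whose associated directed graph (edge $i\to j$ iff $p_{ij}>0$) is strongly connected. Let $\Delta_n=\{x\in\mathbb{R}^n: x\ge 0,\ \mathbb{1}_n^Tx=1\}$. (1) Let $a_i,b_i:[0,1]\to[0,1]$ ($i=1,\dots,n$) be real-analytic functions with $d_i(x_i):=1-a_i(x_i)-b_i(x_i)\neq 0$ (and $\ge 0$) for all $i$ and all $x_i\in[0,1]$. For $x\in\Delta_n$ set $A(x)=\mathrm{diag}(a_1(x_1),\dots,a_n(x_n))$, $B(x)=\mathrm{diag}(b_1(x_1),\dots,b_n(x_n))$, let $Z(x)$ be a doubly stochastic orthogonal matrix whose entries are continuous functions of $x$, and set $C(x)=(\mathbb{I}_n-A(x)-B(x))Z(x)$. Consider the self-appraisal dynamics $$x(s+1)=\big[(\mathbb{I}_n-A(x(s))-B(x(s))P)^{-1}C(x(s))\big]^T\mathbb{1}_n/n .$$ Define $$U(x)=\mathbb{1}_n\mathbb{1}_n^T/n-\big[\mathbb{I}_n-A(x)-B(x)\big]^{-1}B(x)(\mathbb{I}_n-P),$$ and let $u(x)^T$ denote the left eigenvector of $U(x)$ associated with eigenvalue $1$, normalized so that its entries sum to $1$. Then this dynamics is equivalent to $x(s+1)=F(x(s))$, where $F:\Delta_n\to\Delta_n$, $F(x)^T=u(x)^TZ(x)$, is a continuous map. (2) Let $a_i:[0,1]\to[0,1]$ ($i=1,\dots,n$)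 be real-analytic functions, $A(x)=\mathrm{diag}(a_1(x_1),\dots,a_n(x_n))$, and consider the dynamics $x(s+1)=v(x(s))$, where $v(x)\in\Delta_n$ is such that $v(x)^T$ is the left eigenvector of $A(x)+(\mathbb{I}_n-A(x))P$ associated with eigenvalue $1$. Let $p\in\Delta_n$ be such that $p^T$ is the dominant left eigenvector of $P$ (i.e. $p^TP=p^T$). Then this dynamics is equivalent to $x(s+1)=F(x(s))$, where $F:\Delta_n\to\Delta_n$ is the continuous map $$F(x)=\begin{cases} e_i, & \text{if } a_i(x_i)=1 \text{ for some } i,\\[2pt] \left(\dfrac{p_1}{1-a_1(x_1)},\dots,\dfrac{p_n}{1-a_n(x_n)}\right)^T\Big/\displaystyle\sum_{j=1}^n\frac{p_j}{1-a_j(x_j)}, & \text{otherwise.}\end{cases}$$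
   Context: $\mathbb{1}_n$ is the all-ones vector, $\mathbb{I}_n$ the identity matrix, $e_i$ the $i$-th standard basis vector, $\mathrm{diag}(\cdot)$ the diagonal matrix with the given diagonal entries. These dynamics model the evolution over a sequence of issues $s=0,1,2,\dots$ of agents' self-appraisals $x(s)\in\Delta_n$ (reflected appraisals), where in part (1) the opinions on each issue follow $y(t+1)=(A+BP)y(t)+Cy(0)$ and in part (2) they follow $y(t+1)=(A+(\mathbb{I}_n-A)P)y(t)$. In part (2) the paper implicitly assumes that for each $x\in\Delta_n$ at most one index $i$ satisfies $a_i(x_i)=1$ (so that the eigenvector $v(x)$ and the map $F$ are well defined). *)

(* Defs.v *)
From HB Require Import structures.
From mathcomp Require Import all_boot all_order all_algebra.
From mathcomp Require Import all_classical all_reals all_analysis.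
Set Implicit Arguments. Unset Strict Implicit. Unset Printing Implicit Defensive.
Import Order.TTheory GRing.Theory Num.Theory numFieldNormedType.Exports.
Local Open Scope classical_set_scope.
Local Open Scope ring_scope.

Section Defs.
Variables (R : realType) (n : nat).

Definition ones : 'cV[R]_n := const_mx 1.

Definition simplex : set 'cV[R]_n :=
  [set x | (forall i, 0 <= x i 0) /\ \sum_i x i 0 = 1].

Definition real_analytic01 (f : R -> R) : Prop :=
  forall t0, 0 <= t0 <= 1 -> exists2 r : R, 0 < r &
    exists c : nat -> R, forall t, 0 <= t <= 1 -> `|t - t0| < r ->
      (series (fun k => c k * (t - t0) ^+ k) : R^nat) @ \oo --> (f t : R).

Definition maps01 (f : R -> R) : Prop :=
  forall t, 0 <= t <= 1 -> 0 <= f t <= 1.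

Definition row_stochastic (M : 'M[R]_n) : Prop :=
  (forall i j, 0 <= M i j) /\ (forall i, \sum_j M i j = 1).

Definition doubly_stochastic (M : 'M[R]_n) : Prop :=
  (forall i j, 0 <= M i j) /\ (forall i, \sum_j M i j = 1) /\
  (forall j, \sum_i M i j = 1).

Definition orthogonal_mx (M : 'M[R]_n) : Prop := M *m M^T = 1%:M.

Definition graph_rel (M : 'M[R]_n) : rel 'I_n := fun i j => 0 < M i j.

Definition strongly_connected (M : 'M[R]_n) : Prop :=
  forall i j, connect (graph_rel M) i j.

Definition diagf (f : 'I_n -> R -> R) (x : 'cV[R]_n) : 'M[R]_n :=
  diag_mx (\row_i f i (x i 0)).

Definition Cmat (a b : 'I_n -> R -> R) (Z : 'cV[R]_n -> 'M[R]_n) x : 'M[R]_n :=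
  (1%:M - diagf a x - diagf b x) *m Z x.

Definition dyn1 (P : 'M[R]_n) (a b : 'I_n -> R -> R)
  (Z : 'cV[R]_n -> 'M[R]_n) (x : 'cV[R]_n) : 'cV[R]_n :=
  (n%:R)^-1 *: ((invmx (1%:M - diagf a x - diagf b x *m P) *m Cmat a b Z x)^T
                 *m ones).

Definition Umat (P : 'M[R]_n) (a b : 'I_n -> R -> R) x : 'M[R]_n :=
  (n%:R)^-1 *: (ones *m ones^T)
  - invmx (1%:M - diagf a x - diagf b x) *m diagf b x *m (1%:M - P).

Definition left_eig1_normalized (M : 'M[R]_n) (u : 'cV[R]_n) : Prop :=
  u^T *m M = u^T /\ \sum_i u i 0 = 1.

Definition M2 (P : 'M[R]_n) (a : 'I_n -> R -> R) x : 'M[R]_n :=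
  diagf a x + (1%:M - diagf a x) *m P.

Definition F2 (a : 'I_n -> R -> R) (p : 'cV[R]_n) (x : 'cV[R]_n) : 'cV[R]_n :=
  match [pick i | a i (x i 0) == 1] with
  | Some i => delta_mx i 0
  | None => (\sum_j p j 0 / (1 - a j (x j 0)))^-1 *:
              \col_j (p j 0 / (1 - a j (x j 0)))
  end.

End Defs.

(* Main.v *)
Require Import Defs.
From HB Require Import structures.
From mathcomp Require Import all_boot all_order all_algebra.
From mathcomp Require Import all_classical all_reals all_analysis.
From mathcomp Require Import lra ring.
Import Order.TTheory GRing.Theory Num.Theory numFieldNormedType.Exports.
Local Open Scope classical_set_scope.
Local Open Scope ring_scope.
Section Analytic.
Variable R : realType.

Lemma geom_bound (q : R) (N : nat) : 0 <= q -> q <= 1/2 ->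
  \sum_(k < N) (if (k : nat) == 0%N then 0 else q ^+ k) <= 2 * q.
Proof.
move=> q0 q1.
have H : forall N, \sum_(k < N.+1) (if (k : nat) == 0%N then 0 else q ^+ k) <= 2 * q - 2 * q ^+ N.+1.
  elim=> [|m IH]; first by rewrite big_ord_recr big_ord0 /= expr1; lra.
  rewrite big_ord_recr /=.
  have e : q ^+ m.+2 = q * q ^+ m.+1 by rewrite exprS.
  have p0 : 0 <= q ^+ m.+1 by rewrite exprn_ge0.
  rewrite e; nra.
case: N => [|N]; first by rewrite big_ord0; lra.
apply: le_trans (H N) _.
have : 0 <= q ^+ N.+1 by rewrite exprn_ge0.
lra.
Qed.

End Analytic.
Section Analytic2.
Variable R : realType.

Lemma analytic_cont (f : R -> R) (t0 : R) : real_analytic01 f -> 0 <= t0 <= 1 ->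
  forall e : R, 0 < e -> exists2 d : R, 0 < d &
    forall t, 0 <= t <= 1 -> `|t - t0| < d -> `|f t - f t0| < e.
Proof.
move=> Hf Ht0 e e0.
have [r r0 [c Hc]] := Hf t0 Ht0.
pose h := Num.min (r / 2) (1 / 2).
have h0 : 0 < h by rewrite lt_min; apply/andP; split; lra.
have hr : h <= r / 2 by rewrite ge_min lexx.
have h1 : h <= 1 / 2 by rewrite ge_min lexx orbT.
pose t1 := if t0 <= 1/2 then t0 + h else t0 - h.
have t1i : 0 <= t1 <= 1.
  rewrite /t1; case: ifP => H; move/andP: Ht0 => [Ha Hb]; apply/andP.
    by split; lra.
  by move/negbT: H; rewrite -ltNge => H; split; lra.
have t1h : `|t1 - t0| = h.
  rewrite /t1; case: ifP => _.
    by rewrite addrAC subrr add0r gtr0_norm.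
  by rewrite addrAC subrr add0r normrN gtr0_norm.
have cv1 := Hc t1 t1i ltac:(rewrite t1h; lra).
have cs : cvgn (series (fun k => c k * (t1 - t0) ^+ k)).
  by apply/cvg_ex; exists (f t1).
have := cvg_seq_bounded (cvgP _ (cvg_series_cvg_0 cs)).
move=> HB.
have [K HK'] : exists K, forall k, `|c k| * h ^+ k <= K.
  have PF : ProperFilter (globally (@setT nat)) by apply: (@globally_properfilter _ _ 0%N).
  move: HB => /(@ex_bound _ _ _ _ _ PF) [M HM]; exists M => k.
  by have := HM k I; rewrite /= normrM normrX t1h.
have K0 : 0 <= K by apply: le_trans (HK' 0%N); rewrite expr0 mulr1.
pose d := Num.min (h / 2) (e * h / (4 * (K + 1))).
have d0 : 0 < d.
  rewrite lt_min; apply/andP; split; first lra.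
  apply: divr_gt0; [exact: mulr_gt0 | lra].
exists d => // t Ht Htd.
pose q := `|t - t0| / h.
have q0 : 0 <= q by rewrite divr_ge0 // ltW.
have qd : `|t - t0| < d by [].
have q1 : q <= 1/2.
  rewrite /q ler_pdivrMr //; apply: le_trans (ltW qd) _.
  rewrite ge_min; apply/orP; left; lra.
have cv0 := Hc t0 Ht0 ltac:(rewrite subrr normr0 //).
have cvt := Hc t Ht ltac:(apply: lt_le_trans Htd _; rewrite ge_min; apply/orP; left; lra).
have cvB := cvgB cvt cv0.
have bound : forall N, `|(series (fun k => c k * (t - t0) ^+ k) -
     series (fun k => c k * (t0 - t0) ^+ k)) N| <= 2 * K * q.
  move=> N.
  have -> : forall (u v : R^nat), (u - v) N = u N - v N by [].
  rewrite /series /= -sumrB.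
  apply: le_trans (ler_norm_sum _ _ _) _.
  rewrite big_mkord.
  apply: (@le_trans _ _ (\sum_(k < N) K * (if (k : nat) == 0%N then 0 else q ^+ k))).
    apply: ler_sum => k _; rewrite subrr.
    case: (k : nat) => [|k'] /=; first by rewrite !expr0 subrr normr0 mulr0.
    rewrite expr0n /= mulr0 subr0 normrM normrX.
    have -> : `|t - t0| = q * h by rewrite /q divfK // gt_eqF.
    rewrite exprMn mulrA mulrAC; apply: ler_wpM2r; [exact: exprn_ge0 | exact: HK'].
  rewrite -mulr_sumr [2 * K]mulrC -mulrA; apply: ler_wpM2l => //; exact: geom_bound.
have : `|f t - f t0| <= 2 * K * q.
  have Hcl : closed [set y : R | y <= 2 * K * q] by exact: closed_le.
  have HH := closed_cvg _ Hcl _ _ (cvg_norm (cvB _)).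
  apply: HH; apply: nearW => N; exact: bound N.
move=> H.
have Hs : `|t - t0| * (4 * (K + 1)) < e * h.
  rewrite -ltr_pdivlMr; last lra.
  apply: lt_le_trans Htd _; rewrite ge_min; apply/orP; right; exact: lexx.
have qe : q * (4 * (K + 1)) < e by rewrite /q mulrAC ltr_pdivrMr.
nra.
Qed.

End Analytic2.
Section MatCvg.
Context {R : realType} {T : Type} {F : set_system T} {FF : Filter F}.

Lemma cvg_sum_seq (I : Type) (r : seq I) (P : pred I) (f : I -> T -> R) (l : I -> R) :
  (forall i, P i -> f i @ F --> l i) ->
  (fun y => \sum_(i <- r | P i) f i y) @ F --> \sum_(i <- r | P i) l i.
Proof.
move=> H; elim: r => [|i r IH].
  rewrite big_nil; under eq_cvg do rewrite big_nil; exact: cvg_cst.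
rewrite big_cons; under eq_cvg do rewrite big_cons.
case: (boolP (P i)) => Pi //.
exact: cvgD (H i Pi) IH.
Qed.

Lemma cvg_prod_seq (I : Type) (r : seq I) (P : pred I) (f : I -> T -> R) (l : I -> R) :
  (forall i, P i -> f i @ F --> l i) ->
  (fun y => \prod_(i <- r | P i) f i y) @ F --> \prod_(i <- r | P i) l i.
Proof.
move=> H; elim: r => [|i r IH].
  rewrite big_nil; under eq_cvg do rewrite big_nil; exact: cvg_cst.
rewrite big_cons; under eq_cvg do rewrite big_cons.
case: (boolP (P i)) => Pi //.
exact: cvgM (H i Pi) IH.
Qed.

Definition mcvg p q (G : T -> 'M[R]_(p, q)) (L : 'M[R]_(p, q)) :=
  forall i j, (fun y => G y i j) @ F --> L i j.
Arguments mcvg {p q}.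

Lemma mcvg_cst p q (L : 'M[R]_(p, q)) : mcvg (fun=> L) L.
Proof. move=> i j; exact: cvg_cst. Qed.

Lemma mcvg_mul p q s (A : T -> 'M[R]_(p, q)) (B : T -> 'M[R]_(q, s)) LA LB :
  mcvg A LA -> mcvg B LB -> mcvg (fun y => A y *m B y) (LA *m LB).
Proof.
move=> HA HB i j; rewrite mxE; under eq_cvg do rewrite mxE.
apply: cvg_sum_seq => k _; exact: cvgM (HA i k) (HB k j).
Qed.

Lemma mcvg_add p q (A B : T -> 'M[R]_(p, q)) LA LB :
  mcvg A LA -> mcvg B LB -> mcvg (fun y => A y + B y) (LA + LB).
Proof.
move=> HA HB i j; rewrite mxE; under eq_cvg do rewrite mxE.
exact: cvgD (HA i j) (HB i j).
Qed.

Lemma mcvg_opp p q (A : T -> 'M[R]_(p, q)) LA :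
  mcvg A LA -> mcvg (fun y => - A y) (- LA).
Proof.
move=> HA i j; rewrite mxE; under eq_cvg do rewrite mxE.
exact: cvgN (HA i j).
Qed.

Lemma mcvg_sub p q (A B : T -> 'M[R]_(p, q)) LA LB :
  mcvg A LA -> mcvg B LB -> mcvg (fun y => A y - B y) (LA - LB).
Proof. by move=> HA HB; apply: mcvg_add => //; apply: mcvg_opp. Qed.

Lemma mcvg_scale p q (c : R) (A : T -> 'M[R]_(p, q)) LA :
  mcvg A LA -> mcvg (fun y => c *: A y) (c *: LA).
Proof.
move=> HA i j; rewrite mxE; under eq_cvg do rewrite mxE.
exact: cvgM (cvg_cst c) (HA i j).
Qed.

Lemma mcvg_tr p q (A : T -> 'M[R]_(p, q)) LA :
  mcvg A LA -> mcvg (fun y => (A y)^T) LA^T.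
Proof.
move=> HA i j; rewrite mxE; under eq_cvg do rewrite mxE.
exact: HA.
Qed.

Lemma mcvg_det p (A : T -> 'M[R]_p) LA :
  mcvg A LA -> (fun y => \det (A y)) @ F --> \det LA.
Proof.
move=> HA; rewrite /determinant; apply: cvg_sum_seq => s _.
apply: cvgM; first exact: cvg_cst.
apply: cvg_prod_seq => i _; exact: HA.
Qed.

Lemma mcvg_row'col' p (A : T -> 'M[R]_p.+1) LA i j :
  mcvg A LA -> mcvg (fun y => row' i (col' j (A y))) (row' i (col' j LA)).
Proof.
move=> HA k l; rewrite !mxE; under eq_cvg do rewrite !mxE.
exact: HA.
Qed.

Lemma mcvg_adj p (A : T -> 'M[R]_p) LA :
  mcvg A LA -> mcvg (fun y => \adj (A y)) (\adj LA).
Proof.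
case: p A LA => [|p] A LA HA i j; first by case: i.
rewrite mxE; under eq_cvg do rewrite mxE.
rewrite /cofactor; apply: cvgM; first exact: cvg_cst.
exact: mcvg_det (@mcvg_row'col' _ _ _ j i HA).
Qed.

Lemma mcvg_inv p (A : T -> 'M[R]_p) LA :
  mcvg A LA -> LA \in unitmx -> (\forall y \near F, A y \in unitmx) ->
  mcvg (fun y => invmx (A y)) (invmx LA).
Proof.
move=> HA LU AU i j.
have e : {near F, (fun y => ((\det (A y))^-1 * \adj (A y) i j)) =1 (fun y => invmx (A y) i j)}.
  by apply: filterS AU => y yU /=; rewrite /invmx yU [RHS]mxE.
apply: cvg_trans (near_eq_cvg e) _.
have -> : invmx LA i j = (\det LA)^-1 * \adj LA i j by rewrite /invmx LU [LHS]mxE.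
apply: cvgM; last exact: mcvg_adj.
apply: cvgV; last exact: mcvg_det.
by rewrite -unitfE -unitmxE.
Qed.

Lemma mcvg_cvg p q (A : T -> 'M[R]_(p, q)) LA :
  mcvg A LA -> A @ F --> LA.
Proof.
move=> HA; apply/cvgrPdist_lt => e e0.
have H : forall ij : 'I_p * 'I_q, \forall y \near F, `|LA ij.1 ij.2 - A y ij.1 ij.2| < e.
  move=> [i j]; have := HA i j; move/cvgrPdist_lt; exact.
apply: (@filterS _ F FF _ _ _ (@filter_forall _ _ _ F FF H)) => y Hy /=.
have -> : `|LA - A y| = mx_norm (LA - A y) by [].
rewrite mx_normrE; apply: bigmax_lt => // ij _.
by rewrite !mxE; have := Hy ij.
Qed.

Lemma cvg_mcvg p q (A : T -> 'M[R]_(p, q)) LA :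
  A @ F --> LA -> mcvg A LA.
Proof.
move=> HA i j.
exact: (cvg_comp _ _ HA (@coord_continuous R p q i j LA)).
Qed.

End MatCvg.
Section Stoch.
Variables (R : realType) (n : nat).

Lemma lefteigE (y : 'cV[R]_n) (M : 'M[R]_n) :
  (y^T *m M = y^T) <-> forall j, \sum_k y k 0 * M k j = y j 0.
Proof.
split.
  move/matrixP => H j; have := H 0 j; rewrite !mxE => <-.
  by apply: eq_bigr => k _; rewrite mxE.
move=> H; apply/matrixP => i j; rewrite ord1 !mxE -H.
by apply: eq_bigr => k _; rewrite mxE.
Qed.

Lemma in_simplexE (x : 'cV[R]_n) :
  x \in simplex (R:=R) (n:=n) <-> (forall i, 0 <= x i 0) /\ \sum_i x i 0 = 1.
Proof. by rewrite in_setE. Qed.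

Lemma simplex_le1 (x : 'cV[R]_n) i : x \in simplex (R:=R) (n:=n) -> 0 <= x i 0 <= 1.
Proof.
move/in_simplexE => [H0 H1]; rewrite H0 /= -H1 (bigD1 i) //= lerDl.
by apply: sumr_ge0 => k _.
Qed.

Variable P : 'M[R]_n.
Hypothesis Pst : row_stochastic P.
Hypothesis Psc : strongly_connected P.

Lemma connect_back (Q : pred 'I_n) i j :
  (forall k l, graph_rel P k l -> Q l -> Q k) -> connect (graph_rel P) i j -> Q j -> Q i.
Proof.
move=> HQ /connectP [s Hs ->] {j}.
elim: s i Hs => [|x s IH] i //= /andP [e Hs] Ql.
exact: HQ e (IH x Hs Ql).
Qed.

Lemma zero_prop (y : 'cV[R]_n) j0 :
  (forall j, 0 <= y j 0) -> (forall j, \sum_k y k 0 * P k j = y j 0) ->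
  y j0 0 = 0 -> forall i, y i 0 = 0.
Proof.
move=> y0 ye yj i.
have := @connect_back (fun k => y k 0 == 0) i j0.
move=> H; apply/eqP; apply: H; last by rewrite yj.
  move=> k l; rewrite /graph_rel => Pkl /eqP yl.
  have : \sum_k0 y k0 0 * P k0 l = 0 by rewrite ye.
  move/eqP; rewrite psumr_eq0; last by move=> m _; rewrite mulr_ge0 //; case: Pst.
  move/allP => /(_ k (mem_index_enum _)) /=; rewrite mulf_eq0 => /orP [//|].
  by rewrite gt_eqF.
exact: Psc.
Qed.

Lemma p_pos (p : 'cV[R]_n) : p \in simplex (R:=R) (n:=n) -> p^T *m P = p^T ->
  forall j, 0 < p j 0.
Proof.
move=> /in_simplexE [p0 p1] /lefteigE pe j.
rewrite lt_def p0 andbT; apply/eqP => pj.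
have := @zero_prop p j p0 pe pj.
move=> H; move: p1; rewrite (eq_bigr (fun=> 0)) => [|i _]; last exact: H.
by rewrite big1_eq => /eqP; rewrite eq_sym oner_eq0.
Qed.

Lemma one_dim (p z : 'cV[R]_n) (j1 : 'I_n) : p \in simplex (R:=R) (n:=n) -> p^T *m P = p^T ->
  (forall j, \sum_k z k 0 * P k j = z j 0) -> exists c, forall j, z j 0 = c * p j 0.
Proof.
move=> ps pe ze.
have pp := @p_pos p ps pe.
move/lefteigE: pe => pe.
case: (@arg_minP _ _ 'I_n j1 xpredT (fun j => z j 0 / p j 0) isT) => j0 _ Hmin.
pose c := z j0 0 / p j0 0.
exists c.
pose y : 'cV[R]_n := \col_j (z j 0 - c * p j 0).
have y0 : forall j, 0 <= y j 0.
  move=> j; rewrite mxE subr_ge0 -ler_pdivlMr ?pp //; exact: Hmin.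
have ye : forall j, \sum_k y k 0 * P k j = y j 0.
  move=> j; rewrite mxE -ze -[X in _ = _ - c * X]pe mulr_sumr -sumrB.
  by apply: eq_bigr => k _; rewrite mxE mulrBl mulrA.
have yj0 : y j0 0 = 0 by rewrite mxE /c divfK ?subrr // gt_eqF ?pp.
move=> j; have := @zero_prop y j0 y0 ye yj0 j.
by rewrite mxE => /eqP; rewrite subr_eq0 => /eqP.
Qed.

End Stoch.
Section CompCvg.
Variables (R : realType) (n : nat).

Lemma coord_cvg_within (x0 : 'cV[R]_n) i :
  (fun y : 'cV[R]_n => y i 0) @ within (simplex (R:=R) (n:=n)) (nbhs x0) --> x0 i 0.
Proof.
apply: cvg_trans; last exact: (@coord_continuous R n 1 i 0 x0).
apply: cvg_app; exact: cvg_within.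
Qed.

Lemma comp_cvg (f : R -> R) (x0 : 'cV[R]_n) i : real_analytic01 f ->
  x0 \in simplex (R:=R) (n:=n) ->
  (fun y : 'cV[R]_n => f (y i 0)) @ within (simplex (R:=R) (n:=n)) (nbhs x0) --> f (x0 i 0).
Proof.
move=> Hf x0s; apply/cvgrPdist_lt => e e0.
have [d d0 Hd] := @analytic_cont R f (x0 i 0) Hf (@simplex_le1 R n x0 i x0s) e e0.
have Hw : \forall y \near within (simplex (R:=R) (n:=n)) (nbhs x0), simplex y by exact: withinT.
have Hn := (cvgrPdist_lt _ _).1 (coord_cvg_within x0 i) d d0.
have WF : Filter (within (simplex (R:=R) (n:=n)) (nbhs x0)) by exact: within_filter.
apply: (filterS2 WF _ Hw (Hn WF)) => y ys hy.
rewrite distrC; apply: Hd; last by rewrite distrC.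
by apply: simplex_le1; rewrite in_setE.
Qed.

End CompCvg.
Section Part2.
Variables (R : realType) (n : nat) (P : 'M[R]_n).
Hypothesis Pst : row_stochastic P.
Hypothesis Psc : strongly_connected P.

Lemma diagfE (f : 'I_n -> R -> R) (x : 'cV[R]_n) i j :
  diagf f x i j = f i (x i 0) * (i == j)%:R.
Proof. by rewrite /diagf !mxE mulr_natr. Qed.

Lemma sum_delta (F : 'I_n -> R) j : \sum_k F k * (k == j)%:R = F j.
Proof.
rewrite (bigD1 j) //= eqxx mulr1 big1 ?addr0 // => k /negbTE ->; by rewrite mulr0.
Qed.

Lemma sub1diagE (f : 'I_n -> R -> R) (x : 'cV[R]_n) k l :
  (1%:M - diagf f x) k l = (1 - f k (x k 0)) * (k == l)%:R.
Proof.
rewrite /diagf !mxE; case: (k == l); rewrite ?mulr1n ?mulr0n ?mulr1 ?mulr0 //.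
by rewrite subr0.
Qed.

Lemma mul_1subdiag (f : 'I_n -> R -> R) (x : 'cV[R]_n) (B : 'M[R]_n) k j :
  ((1%:M - diagf f x) *m B) k j = (1 - f k (x k 0)) * B k j.
Proof.
rewrite mxE (bigD1 k) //= big1 ?addr0.
  by rewrite sub1diagE eqxx mulr1.
by move=> l lk; rewrite sub1diagE eq_sym (negbTE lk) mulr0 mul0r.
Qed.

Lemma M2E (a : 'I_n -> R -> R) x k j :
  M2 P a x k j = a k (x k 0) * (k == j)%:R + (1 - a k (x k 0)) * P k j.
Proof. by rewrite /M2 mxE diagfE mul_1subdiag. Qed.

Variables (a : 'I_n -> R -> R) (p : 'cV[R]_n).
Hypothesis amap : forall i, maps01 (a i).
Hypothesis auniq : forall x, x \in simplex (R:=R) (n:=n) -> forall i j,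
        a i (x i 0) = 1 -> a j (x j 0) = 1 -> i = j.
Hypothesis ps : p \in simplex (R:=R) (n:=n).
Hypothesis pe : p^T *m P = p^T.

Lemma a01 (x : 'cV[R]_n) i : x \in simplex (R:=R) (n:=n) -> 0 <= a i (x i 0) <= 1.
Proof. by move=> xs; apply: amap; apply: simplex_le1. Qed.

Lemma F2_some (x : 'cV[R]_n) i : x \in simplex (R:=R) (n:=n) ->
  a i (x i 0) = 1 -> F2 a p x = delta_mx i 0.
Proof.
move=> xs ai; rewrite /F2; case: pickP => [k /eqP ak | H]; last by move: (H i); rewrite ai eqxx.
by rewrite (auniq x xs k i ak ai).
Qed.

Lemma F2_none (x : 'cV[R]_n) : x \in simplex (R:=R) (n:=n) ->
  (forall i, a i (x i 0) != 1) ->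
  F2 a p x = (\sum_j p j 0 / (1 - a j (x j 0)))^-1 *:
              \col_j (p j 0 / (1 - a j (x j 0))).
Proof.
move=> xs H; rewrite /F2; case: pickP => [k /eqP ak | //].
by move: (H k); rewrite ak eqxx.
Qed.

Lemma beta_pos (x : 'cV[R]_n) i : x \in simplex (R:=R) (n:=n) ->
  a i (x i 0) != 1 -> 0 < 1 - a i (x i 0).
Proof.
move=> xs ne; have /andP [_ h] := a01 x i xs.
by rewrite subr_gt0 lt_def eq_sym ne h.
Qed.

Lemma F2_prop (x : 'cV[R]_n) : x \in simplex (R:=R) (n:=n) ->
  F2 a p x \in simplex (R:=R) (n:=n) /\ (F2 a p x)^T *m M2 P a x = (F2 a p x)^T.
Proof.
move=> xs.
have [[i ai]|Hn'] : (exists i, a i (x i 0) = 1) \/ (forall i, a i (x i 0) != 1).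
  case: (pickP (fun i => a i (x i 0) == 1)) => [i /eqP ai | Hn]; first by left; exists i.
  by right => i; rewrite Hn.
  rewrite (F2_some x i xs ai); split.
    apply/in_simplexE; split => [k|]; first by rewrite mxE; case: (_ && _).
    rewrite (bigD1 i) //= big1 ?addr0; first by rewrite mxE !eqxx.
    by move=> k ki; rewrite mxE (negbTE ki).
  apply/lefteigE => j.
  rewrite (bigD1 i) //= big1 ?addr0.
    rewrite M2E mxE !eqxx /= mul1r ai subrr mul0r addr0 mul1r.
    by rewrite mxE eqxx andbT eq_sym.
  by move=> k ki; rewrite mxE (negbTE ki) mul0r.
have bp := fun i => beta_pos x i xs (Hn' i).
have [p0 p1] := (@in_simplexE R n p).1 ps.
rewrite (F2_none x xs Hn').
set s := \sum_j p j 0 / (1 - a j (x j 0)).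
have s1 : 1 <= s.
  rewrite -p1 /s; apply: ler_sum => j _.
  rewrite ler_pdivlMr ?bp // ler_piMr //.
  by have /andP [h _] := a01 x j xs; rewrite lerBlDr lerDl.
have s0 : 0 < s by apply: lt_le_trans s1; exact: ltr01.
split.
  apply/in_simplexE; split => [k|].
    rewrite !mxE; apply: mulr_ge0; [by rewrite invr_ge0 ltW | by rewrite divr_ge0 // ltW].
  under eq_bigr do rewrite !mxE.
  by rewrite -mulr_sumr mulVf // gt_eqF.
apply/lefteigE => j.
have pej := (@lefteigE R n p P).1 pe j.
have E : forall k, ((s^-1 *: \col_j0 (p j0 0 / (1 - a j0 (x j0 0)))) k 0 * M2 P a x k j) =
   s^-1 * (p k 0 / (1 - a k (x k 0)) * a k (x k 0)) * (k == j)%:R + s^-1 * (p k 0 * P k j).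
  move=> k; rewrite M2E !mxE.
  have bk := bp k; field; by rewrite !gt_eqF.
rewrite (eq_bigr _ (fun k _ => E k)).
rewrite big_split /= (sum_delta (fun k => s^-1 * (p k 0 / (1 - a k (x k 0)) * a k (x k 0)))).
rewrite -mulr_sumr pej !mxE.
have bj := bp j; field; by rewrite !gt_eqF.
Qed.

Variable i0 : 'I_n.

Lemma F2_unique (x v : 'cV[R]_n) : x \in simplex (R:=R) (n:=n) ->
  v \in simplex (R:=R) (n:=n) -> v^T *m M2 P a x = v^T -> v = F2 a p x.
Proof.
move=> xs vs /lefteigE ve.
have [v0 v1] := (@in_simplexE R n v).1 vs.
have [p0 p1] := (@in_simplexE R n p).1 ps.
have pp := @p_pos R n P Pst Psc p ps pe.
pose z : 'cV[R]_n := \col_k ((1 - a k (x k 0)) * v k 0).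
have ze : forall j, \sum_k z k 0 * P k j = z j 0.
  move=> j; have := ve j.
  under eq_bigr do rewrite M2E mulrDr mulrA.
  rewrite big_split /= (sum_delta (fun k => v k 0 * a k (x k 0))) => h.
  have Hs : \sum_k z k 0 * P k j = \sum_k v k 0 * ((1 - a k (x k 0)) * P k j).
    by apply: eq_bigr => k _; rewrite mxE mulrA [v k 0 * _]mulrC.
  rewrite Hs mxE; apply: (addrI (v j 0 * a j (x j 0))); rewrite h; ring.
have [c Hc] := @one_dim R n P Pst Psc p z i0 ps pe ze.
have Hc' : forall k, (1 - a k (x k 0)) * v k 0 = c * p k 0 by move=> k; rewrite -Hc mxE.
have [[i ai]|Hn'] : (exists i, a i (x i 0) = 1) \/ (forall i, a i (x i 0) != 1).
  case: (pickP (fun i => a i (x i 0) == 1)) => [i /eqP ai | Hn]; first by left; exists i.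
  by right => i; rewrite Hn.
  rewrite (F2_some x i xs ai).
  have c0 : c = 0.
    have := Hc' i; rewrite ai subrr mul0r => /esym /eqP; rewrite mulf_eq0 => /orP [/eqP //|].
    by rewrite gt_eqF.
  have vk : forall k, k != i -> v k 0 = 0.
    move=> k ki; have := Hc' k; rewrite c0 mul0r => /eqP; rewrite mulf_eq0 => /orP [|/eqP //].
    rewrite subr_eq0 => /eqP ak; move: ki; by rewrite (auniq x xs k i (esym ak) ai) eqxx.
  have vi : v i 0 = 1.
    by rewrite -v1 (bigD1 i) //= big1 ?addr0 // => k ki; rewrite vk.
  apply/matrixP => k l; rewrite ord1 mxE eqxx andbT.
  by case: (boolP (k == i)) => [/eqP -> | ki]; rewrite ?vi ?vk.
have bp := fun i => beta_pos x i xs (Hn' i).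
rewrite (F2_none x xs Hn').
set s := \sum_j p j 0 / (1 - a j (x j 0)).
have vk : forall k, v k 0 = c * (p k 0 / (1 - a k (x k 0))).
  move=> k; rewrite mulrA -Hc' mulrC mulrA mulVf ?mul1r // gt_eqF //.
have cs : c * s = 1 by rewrite -v1 /s mulr_sumr; apply: eq_bigr => k _; rewrite vk.
have sc : c = s^-1.
  have s0 : s != 0 by apply/eqP => s0; move: cs; rewrite s0 mulr0 => /eqP; rewrite eq_sym oner_eq0.
  by rewrite -[c]mulr1 -(mulfV s0) mulrA cs mul1r.
apply/matrixP => k l; rewrite ord1 !mxE vk sc //.
Qed.

Definition wv (x : 'cV[R]_n) j := p j 0 * \prod_(k | k != j) (1 - a k (x k 0)).
Definition Gv (x : 'cV[R]_n) : 'cV[R]_n := (\sum_j wv x j)^-1 *: \col_j wv x j.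

Lemma wv_ge0 (x : 'cV[R]_n) j : x \in simplex (R:=R) (n:=n) -> 0 <= wv x j.
Proof.
move=> xs; have [p0 _] := (@in_simplexE R n p).1 ps.
rewrite /wv mulr_ge0 //; apply: prodr_ge0 => k _.
by have /andP [_ h] := a01 x k xs; rewrite subr_ge0.
Qed.

Lemma sum_wv_pos (x : 'cV[R]_n) : x \in simplex (R:=R) (n:=n) -> 0 < \sum_j wv x j.
Proof.
move=> xs.
have pp := @p_pos R n P Pst Psc p ps pe.
pose js := if [pick i | a i (x i 0) == 1] is Some i then i else i0.
have Hb : forall k, k != js -> 0 < 1 - a k (x k 0).
  move=> k kj; apply: beta_pos => //; apply/negP => /eqP ak.
  move: kj; rewrite /js; case: pickP => [i /eqP ai | H].
    by rewrite (auniq x xs k i ak ai) eqxx.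
  by move: (H k); rewrite ak eqxx.
rewrite (bigD1 js) //=; apply: (@lt_le_trans _ _ (wv x js)).
  by rewrite /wv mulr_gt0 // prodr_gt0 // => k; exact: Hb.
by rewrite lerDl; apply: sumr_ge0 => k _; exact: wv_ge0.
Qed.

Lemma prod_split (x : 'cV[R]_n) j :
  \prod_k (1 - a k (x k 0)) = (1 - a j (x j 0)) * \prod_(k | k != j) (1 - a k (x k 0)).
Proof. by rewrite (bigD1 j). Qed.

Lemma F2_G (x : 'cV[R]_n) : x \in simplex (R:=R) (n:=n) -> F2 a p x = Gv x.
Proof.
move=> xs.
have swp := sum_wv_pos x xs.
have [[i ai]|Hn'] : (exists i, a i (x i 0) = 1) \/ (forall i, a i (x i 0) != 1).
  case: (pickP (fun i => a i (x i 0) == 1)) => [i /eqP ai | Hn]; first by left; exists i.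
  by right => i; rewrite Hn.
  rewrite (F2_some x i xs ai).
  have w0 : forall j, j != i -> wv x j = 0.
    move=> j ji; rewrite /wv (bigD1 i) /=; last by rewrite eq_sym.
    by rewrite ai subrr mul0r; exact: mulr0.
  have sw : \sum_j wv x j = wv x i by rewrite (bigD1 i) //= big1 ?addr0 // => j0; exact: w0.
  apply/matrixP => k l; rewrite ord1 !mxE eqxx andbT sw.
  case: (boolP (k == i)) => [/eqP -> | ki] /=; first by rewrite mulVf // -sw gt_eqF.
  by rewrite (w0 k ki) mulr0.
have bp := fun i => beta_pos x i xs (Hn' i).
rewrite (F2_none x xs Hn').
set Pi := \prod_k (1 - a k (x k 0)).
have Pi0 : 0 < Pi by apply: prodr_gt0 => k _; exact: bp.
have wE : forall j, wv x j = Pi * (p j 0 / (1 - a j (x j 0))).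
  move=> j; rewrite /wv /Pi (prod_split x j).
  have := bp j; move=> b; field; by rewrite gt_eqF.
have sE : \sum_j wv x j = Pi * \sum_j p j 0 / (1 - a j (x j 0)).
  by rewrite mulr_sumr; apply: eq_bigr => j _; rewrite wE.
have s0 : \sum_j p j 0 / (1 - a j (x j 0)) != 0.
  by apply/eqP => h; move: swp; rewrite sE h mulr0 ltxx.
apply/matrixP => k l; rewrite ord1 !mxE sE wE.
field; by rewrite s0 !gt_eqF ?bp.
Qed.

Lemma Gv_cvg (x0 : 'cV[R]_n) : (forall i, real_analytic01 (a i)) ->
  x0 \in simplex (R:=R) (n:=n) ->
  Gv @ within (simplex (R:=R) (n:=n)) (nbhs x0) --> Gv x0.
Proof.
move=> an x0s.
have WF : Filter (within (simplex (R:=R) (n:=n)) (nbhs x0)) by exact: within_filter.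
have wc : forall j, (fun y => wv y j) @ within (simplex (R:=R) (n:=n)) (nbhs x0) --> wv x0 j.
  move=> j; apply: cvgM; first exact: cvg_cst.
  apply: (@cvg_prod_seq R _ _ WF) => k _.
  apply: cvgB; first exact: cvg_cst.
  exact: comp_cvg.
apply: (@mcvg_cvg R _ _ WF) => k l.
rewrite mxE; under eq_cvg do rewrite mxE.
apply: cvgM; last by rewrite !mxE; under eq_cvg do rewrite mxE; exact: wc.
apply: cvgV; first by rewrite gt_eqF // sum_wv_pos.
exact: (@cvg_sum_seq R _ _ WF).
Qed.

Lemma F2_cont : (forall i, real_analytic01 (a i)) ->
  {within simplex (R:=R) (n:=n), continuous (F2 a p)}.
Proof.
move=> an; apply/subspace_continuousP => x0 x0s.
have x0s' : x0 \in simplex (R:=R) (n:=n) by rewrite in_setE.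
have WF : Filter (within (simplex (R:=R) (n:=n)) (nbhs x0)) by exact: within_filter.
rewrite /from_subspace /= (F2_G x0 x0s').
have e : {near within (simplex (R:=R) (n:=n)) (nbhs x0), Gv =1 F2 a p}.
  apply: filterS (withinT _ _) => y ys; rewrite (F2_G y) // in_setE //.
apply: cvg_trans (near_eq_cvg e) _.
exact: (Gv_cvg x0 an x0s').
Qed.

End Part2.
Section MxHelp.
Variables (R : realType) (n : nat).

Lemma sub3E (A B C : 'M[R]_n) i j : (A - B - C) i j = A i j - B i j - C i j.
Proof. by rewrite !mxE. Qed.

Lemma diag_mulE (f : 'I_n -> R -> R) (x : 'cV[R]_n) m (B : 'M[R]_(n, m)) k j :
  (diagf f x *m B) k j = f k (x k 0) * B k j.
Proof.
rewrite mxE (bigD1 k) //= big1 ?addr0; first by rewrite diagfE eqxx mulr1.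
by move=> l lk; rewrite diagfE eq_sym (negbTE lk) mulr0 mul0r.
Qed.

Lemma sum_delta' (F : 'I_n -> R) m : \sum_j (m == j)%:R * F j = F m.
Proof.
rewrite (bigD1 m) //= eqxx mul1r big1 ?addr0 // => k /negbTE; rewrite eq_sym => ->; by rewrite mul0r.
Qed.

Lemma sum_delta2 (F : 'I_n -> R) m : \sum_j F j * (m == j)%:R = F m.
Proof.
rewrite (bigD1 m) //= eqxx mulr1 big1 ?addr0 // => k /negbTE; rewrite eq_sym => ->; by rewrite mulr0.
Qed.

Lemma onesTE (u : 'cV[R]_n) : u^T *m ones R n = (\sum_i u i 0)%:M.
Proof.
apply/matrixP => i j; rewrite !ord1 !mxE eqxx mulr1n.
by apply: eq_bigr => k _; rewrite !mxE mulr1.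
Qed.

Lemma nonneg_mul p q s (A : 'M[R]_(p, q)) (B : 'M[R]_(q, s)) :
  (forall i j, 0 <= A i j) -> (forall i j, 0 <= B i j) -> forall i j, 0 <= (A *m B) i j.
Proof. by move=> HA HB i j; rewrite mxE; apply: sumr_ge0 => k _; rewrite mulr_ge0. Qed.

Lemma unit_of_inj (M : 'M[R]_n) : (forall y : 'cV[R]_n, M *m y = 0 -> y = 0) -> M \in unitmx.
Proof.
move=> H; rewrite -unitmx_tr -row_free_unit -kermx_eq0.
apply/eqP/row_matrixP => i; rewrite row0.
set r := row i (kermx M^T).
have h : r *m M^T = 0 by rewrite /r -row_mul mulmx_ker row0.
have : M *m r^T = 0 by rewrite -[M]trmxK -trmx_mul h trmx0.
move/H => /(congr1 trmx); rewrite trmxK trmx0 //.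
Qed.

End MxHelp.

Section Part1.
Variables (R : realType) (n : nat) (P : 'M[R]_n).
Hypothesis Pst : row_stochastic P.
Hypothesis n0 : (0 < n)%N.
Variables (a b : 'I_n -> R -> R) (Z : 'cV[R]_n -> 'M[R]_n).
Hypothesis amap : forall i, maps01 (a i).
Hypothesis bmap : forall i, maps01 (b i).
Hypothesis dpos : forall i t, 0 <= t <= 1 -> 1 - a i t - b i t != 0 /\ 0 <= 1 - a i t - b i t.
Hypothesis Zprop : forall x, x \in simplex (R:=R) (n:=n) ->
        doubly_stochastic (Z x) /\ orthogonal_mx (Z x).

Definition Mm (x : 'cV[R]_n) := 1%:M - diagf a x - diagf b x *m P.
Definition Dm (x : 'cV[R]_n) := 1%:M - diagf a x - diagf b x.

Lemma MmE x i j : Mm x i j = (1 - a i (x i 0)) * (i == j)%:R - b i (x i 0) * P i j.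
Proof. by rewrite /Mm sub3E diag_mulE diagfE !mxE mulrBl mul1r. Qed.

Lemma DmE x i j : Dm x i j = (1 - a i (x i 0) - b i (x i 0)) * (i == j)%:R.
Proof. by rewrite /Dm sub3E !diagfE !mxE !mulrBl mul1r. Qed.

Lemma dpos' (x : 'cV[R]_n) i : x \in simplex (R:=R) (n:=n) ->
  0 < 1 - a i (x i 0) - b i (x i 0).
Proof.
move=> xs; have [h1 h2] := dpos i (x i 0) (@simplex_le1 R n x i xs).
by rewrite lt_def h1 h2.
Qed.

Lemma ab01 (x : 'cV[R]_n) i : x \in simplex (R:=R) (n:=n) ->
  0 <= a i (x i 0) <= 1 /\ 0 <= b i (x i 0) <= 1.
Proof. by move=> xs; split; [apply: amap | apply: bmap]; apply: simplex_le1. Qed.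

Lemma minp (x y : 'cV[R]_n) : x \in simplex (R:=R) (n:=n) ->
  (forall i, 0 <= (Mm x *m y) i 0) -> forall i, 0 <= y i 0.
Proof.
move=> xs Hz i.
case: (@arg_minP _ _ 'I_n i xpredT (fun k => y k 0) isT) => m _ Hm.
apply: le_trans (Hm i isT) ; rewrite leNgt; apply/negP => ym.
have := Hz m; rewrite mxE.
under eq_bigr do rewrite MmE mulrBl mulrAC.
rewrite sumrB (@sum_delta2 R n (fun j => (1 - a m (x m 0)) * y j 0)).
under eq_bigr do rewrite -mulrA.
rewrite -mulr_sumr.
have [Ps1 Ps2] := Pst.
have S : y m 0 <= \sum_j P m j * y j 0.
  rewrite -[X in X <= _]mul1r -(Ps2 m) mulr_suml; apply: ler_sum => j _.
  by apply: ler_wpM2l; [exact: Ps1 | exact: Hm].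
have d := dpos' x m xs.
have [_ /andP [b0 _]] := ab01 x m xs.
move=> h; nra.
Qed.

Lemma Mm_unit x : x \in simplex (R:=R) (n:=n) -> Mm x \in unitmx.
Proof.
move=> xs; apply: unit_of_inj => y My.
have h1 : forall i, 0 <= y i 0 by apply: (@minp x y xs) => i; rewrite My mxE.
have h2 : forall i, 0 <= (- y) i 0 by apply: (@minp x (- y) xs) => i; rewrite mulmxN My oppr0 mxE.
apply/matrixP => i j; rewrite ord1 mxE; apply/eqP; rewrite eq_le h1 andbT.
by have := h2 i; rewrite mxE oppr_ge0.
Qed.

Lemma invM_ge0 x : x \in simplex (R:=R) (n:=n) -> forall k l, 0 <= invmx (Mm x) k l.
Proof.
move=> xs k l.
pose y := invmx (Mm x) *m delta_mx l (0 : 'I_1).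
have : forall i, 0 <= y i 0.
  apply: (@minp x y xs) => i; rewrite /y mulKVmx ?Mm_unit // mxE; by case: (_ && _).
move/(_ k); rewrite /y mxE (bigD1 l) //= big1 ?addr0.
  by rewrite mxE !eqxx mulr1.
by move=> j jl; rewrite mxE (negbTE jl) mulr0.
Qed.

Lemma Dm_diag x : Dm x = diag_mx (\row_i (1 - a i (x i 0) - b i (x i 0))).
Proof. by apply/matrixP => i j; rewrite DmE !mxE mulr_natr. Qed.

Lemma Dm_unit x : x \in simplex (R:=R) (n:=n) -> Dm x \in unitmx.
Proof.
move=> xs; rewrite unitmxE Dm_diag det_diag unitfE.
by apply/prodf_neq0 => i _; rewrite mxE gt_eqF // (dpos' x i xs).
Qed.

Lemma Mones x : Mm x *m ones R n = Dm x *m ones R n.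
Proof.
have [_ Ps2] := Pst.
apply/matrixP => i j; rewrite !mxE.
under eq_bigr do rewrite MmE mxE mulr1.
under [in RHS]eq_bigr do rewrite DmE mxE mulr1.
have e1 : \sum_i0 ((i == i0)%:R : R) = 1.
  by rewrite (bigD1 i) //= eqxx big1 ?addr0 // => k /negbTE; rewrite eq_sym => ->.
by rewrite sumrB -!mulr_sumr Ps2 e1 !mulr1.
Qed.

Lemma DBM x : Dm x + diagf b x *m (1%:M - P) = Mm x.
Proof. by rewrite /Dm /Mm mulmxBr mulmx1 addrA subrK. Qed.

Definition u0 (x : 'cV[R]_n) : 'cV[R]_n :=
  (n%:R^-1 *: ((ones R n)^T *m invmx (Mm x) *m Dm x))^T.

Lemma u0T x : (u0 x)^T = n%:R^-1 *: ((ones R n)^T *m invmx (Mm x) *m Dm x).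
Proof. by rewrite /u0 trmxK. Qed.

Lemma nR0 : (n%:R : R) != 0.
Proof. by rewrite pnatr_eq0 -lt0n. Qed.

Lemma sum_u0 x : x \in simplex (R:=R) (n:=n) -> \sum_i u0 x i 0 = 1.
Proof.
move=> xs.
have h : (u0 x)^T *m ones R n = 1%:M.
  rewrite u0T -scalemxAl -mulmxA -Mones mulmxA -[_ *m invmx _ *m _]mulmxA mulVmx ?Mm_unit //.
  rewrite mulmx1 onesTE.
  have -> : \sum_i ones R n i 0 = n%:R by under eq_bigr do rewrite mxE; rewrite sumr_const card_ord.
  by rewrite scale_scalar_mx mulVf // nR0.
move: h; rewrite onesTE => /matrixP /(_ 0 0); rewrite !mxE eqxx !mulr1n //.
Qed.

Lemma Uchar x (u : 'cV[R]_n) : x \in simplex (R:=R) (n:=n) -> \sum_i u i 0 = 1 ->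
  (u^T *m Umat P a b x = u^T <->
   u^T *m invmx (Dm x) *m Mm x = n%:R^-1 *: (ones R n)^T).
Proof.
move=> xs su.
set K := invmx (Dm x) *m diagf b x *m (1%:M - P).
have E1 : u^T *m Umat P a b x = n%:R^-1 *: (ones R n)^T - u^T *m K.
  rewrite /Umat -/(Dm x) mulmxBr -/K -scalemxAr mulmxA onesTE su mul1mx //.
have E2 : u^T *m invmx (Dm x) *m Mm x = u^T + u^T *m K.
  rewrite -DBM mulmxDr -mulmxA mulVmx ?Dm_unit // mulmx1 /K !mulmxA //.
rewrite E1 E2; split => h.
  by rewrite -{1}h subrK.
by rewrite -h addrK.
Qed.

Lemma u0_char x : x \in simplex (R:=R) (n:=n) ->
  (u0 x)^T *m invmx (Dm x) *m Mm x = n%:R^-1 *: (ones R n)^T.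
Proof.
move=> xs; rewrite u0T -!scalemxAl -!mulmxA mulKVmx ?Dm_unit //.
by rewrite mulVmx ?Mm_unit // mulmx1.
Qed.

Lemma u_uniq x (u : 'cV[R]_n) : x \in simplex (R:=R) (n:=n) ->
  u^T *m invmx (Dm x) *m Mm x = n%:R^-1 *: (ones R n)^T -> u = u0 x.
Proof.
move=> xs h; apply: trmx_inj; rewrite u0T !scalemxAl -h.
by rewrite mulmxK ?Mm_unit // mulmxKV ?Dm_unit.
Qed.

Lemma dyn1_u0 x : dyn1 P a b Z x = ((u0 x)^T *m Z x)^T.
Proof.
apply: trmx_inj; rewrite trmxK u0T /dyn1 /Cmat -/(Mm x) -/(Dm x).
rewrite linearZ /= trmx_mul trmxK -!scalemxAl !mulmxA //.
Qed.

Lemma u0_ge0 x : x \in simplex (R:=R) (n:=n) -> forall i j, 0 <= (u0 x)^T i j.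
Proof.
move=> xs i j; rewrite u0T mxE mulr_ge0 ?invr_ge0 ?ler0n //.
apply: nonneg_mul => [k l|k l]; last by rewrite DmE mulr_ge0 ?ler0n // ltW // (dpos' x k xs).
apply: nonneg_mul => [k' l'|k' l']; first by rewrite mxE mxE.
exact: invM_ge0.
Qed.

Lemma dyn1_simplex x : x \in simplex (R:=R) (n:=n) -> dyn1 P a b Z x \in simplex (R:=R) (n:=n).
Proof.
move=> xs; have [[Z0 [Z1 Z2]] _] := Zprop x xs.
rewrite dyn1_u0; apply/in_simplexE; split => [i|].
  by rewrite mxE; apply: nonneg_mul => //; exact: u0_ge0.
under eq_bigr do rewrite !mxE.
rewrite exchange_big /= -[RHS](sum_u0 x xs); apply: eq_bigr => k _.
by rewrite -mulr_sumr Z1 mulr1 mxE.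
Qed.

Lemma dyn1_cont : (forall i, real_analytic01 (a i) /\ real_analytic01 (b i)) ->
  {within simplex (R:=R) (n:=n), continuous Z} ->
  {within simplex (R:=R) (n:=n), continuous (dyn1 P a b Z)}.
Proof.
move=> an HZ; apply/subspace_continuousP => x0 x0s.
have x0s' : x0 \in simplex (R:=R) (n:=n) by rewrite in_setE.
have WF : Filter (within (simplex (R:=R) (n:=n)) (nbhs x0)) by exact: within_filter.
move/subspace_continuousP: HZ => HZ.
have Zc := HZ x0 x0s.
have dc : forall f : 'I_n -> R -> R, (forall i, real_analytic01 (f i)) ->
    @mcvg R _ (within (simplex (R:=R) (n:=n)) (nbhs x0)) _ _ (fun y => diagf f y) (diagf f x0).
  move=> f Hf i j; rewrite diagfE; under eq_cvg do rewrite diagfE.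
  apply: cvgM; [exact: comp_cvg | exact: cvg_cst].
have ca : forall i, real_analytic01 (a i) by move=> i; case: (an i).
have cb : forall i, real_analytic01 (b i) by move=> i; case: (an i).
have Mc : @mcvg R _ (within (simplex (R:=R) (n:=n)) (nbhs x0)) _ _ (fun y => Mm y) (Mm x0).
  apply: mcvg_sub; first apply: mcvg_sub; first exact: mcvg_cst.
    exact: dc.
  by apply: mcvg_mul; [exact: dc | exact: mcvg_cst].
have Dc : @mcvg R _ (within (simplex (R:=R) (n:=n)) (nbhs x0)) _ _ (fun y => Dm y) (Dm x0).
  apply: mcvg_sub; first apply: mcvg_sub; first exact: mcvg_cst.
    exact: dc.
  exact: dc.
have Uc : \forall y \near within (simplex (R:=R) (n:=n)) (nbhs x0), Mm y \in unitmx.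
  by apply: filterS (withinT _ _) => y ys; apply: Mm_unit; rewrite in_setE.
rewrite /from_subspace /=.
apply: mcvg_cvg.
apply: mcvg_scale; apply: mcvg_mul; last exact: mcvg_cst.
apply: mcvg_tr; apply: mcvg_mul.
  apply: mcvg_inv => //; exact: Mm_unit.
apply: mcvg_mul => //; exact: cvg_mcvg.
Qed.

End Part1.
Theorem theorem1 (R : realType) (n : nat) (P : 'M[R]_n) :
  (2 <= n)%N ->
  row_stochastic P ->
  (forall i, P i i = 0) ->
  (forall i j, 0 <= P i j <= 1) ->
  strongly_connected P ->
  (* part (1) *)
  (forall (a b : 'I_n -> R -> R) (Z : 'cV[R]_n -> 'M[R]_n),
     (forall i, real_analytic01 (a i) /\ real_analytic01 (b i)) ->
     (forall i, maps01 (a i) /\ maps01 (b i)) ->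
     (forall i t, 0 <= t <= 1 ->
        1 - a i t - b i t != 0 /\ 0 <= 1 - a i t - b i t) ->
     (forall x, x \in (@simplex R n) ->
        doubly_stochastic (Z x) /\ orthogonal_mx (Z x)) ->
     {within (@simplex R n), continuous Z} ->
     (forall x, x \in (@simplex R n) ->
        [/\ (1%:M - diagf a x - diagf b x *m P) \in unitmx,
            (exists! u, left_eig1_normalized (Umat P a b x) u),
            (forall u, left_eig1_normalized (Umat P a b x) u ->
               dyn1 P a b Z x = (u^T *m Z x)^T) &
            dyn1 P a b Z x \in (@simplex R n)]) /\
     {within (@simplex R n), continuous (dyn1 P a b Z)}) /\
  (* part (2) *)
  (forall (a : 'I_n -> R -> R) (p : 'cV[R]_n),
     (forall i, real_analytic01 (a i)) ->
     (forall i, maps01 (a i)) ->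
     (forall x, x \in (@simplex R n) -> forall i j,
        a i (x i 0) = 1 -> a j (x j 0) = 1 -> i = j) ->
     p \in (@simplex R n) ->
     p^T *m P = p^T ->
     (forall x, x \in (@simplex R n) ->
        [/\ F2 a p x \in (@simplex R n),
            (F2 a p x)^T *m M2 P a x = (F2 a p x)^T &
            (forall v, v \in (@simplex R n) -> v^T *m M2 P a x = v^T ->
               v = F2 a p x)]) /\
     {within (@simplex R n), continuous (F2 a p)}).
Proof.
move=> n2 Pst Pdiag P01 Psc; split.
  move=> a b Z an mp dp Zp Zc.
  have amap : forall i, maps01 (a i) by move=> i; case: (mp i).
  have bmap : forall i, maps01 (b i) by move=> i; case: (mp i).
  have n0 : (0 < n)%N by apply: leq_trans n2.
  split; last exact: (@dyn1_cont R n P Pst a b Z amap bmap dp an Zc).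
  move=> x xs.
  have UC := @Uchar R n P a b dp.
  have UU := @u_uniq R n P Pst a b amap bmap dp.
  have S0 := @sum_u0 R n P Pst n0 a b amap bmap dp x xs.
  split.
  - exact: (@Mm_unit R n P Pst a b amap bmap dp x xs).
  - exists (u0 R n P a b x); split.
      split; last exact: S0.
      apply/(UC x _ xs S0).
      exact: (@u0_char R n P Pst a b amap bmap dp x xs).
    move=> u [ue us]; apply/esym; apply: (UU x u xs).
    exact/(UC x u xs us).
  - move=> u [ue us]; rewrite dyn1_u0 -(UU x u xs) //.
    exact/(UC x u xs us).
  - exact: (@dyn1_simplex R n P Pst n0 a b Z amap bmap dp Zp x xs).
move=> a p an amap auniq ps pe.
have n0 : (0 < n)%N by apply: leq_trans n2.
split; last exact: (@F2_cont R n P Pst Psc a p amap auniq ps pe (Ordinal n0) an).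
move=> x xs; have [h1 h2] := @F2_prop R n P a p amap auniq ps pe x xs.
split => // v vs ve.
exact: (@F2_unique R n P Pst Psc a p amap auniq ps pe (Ordinal n0) x v xs vs ve).
Qed.
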